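(* Let $t=\alpha^\mu\beta^\nu$ with $\mu\in\mathbb{Z}_{\ge0}^m$, $\nu\in\mathbb{Z}_{\ge0}^n$. If $t$ has a res-representation, then $t$ has a syl-representation. Moreover, if $\nu$ is non-increasing and $\mathcal{R}$ is a res-representation of $t$, then $(\mathcal{R},F_{\bar c})$ is a syl-representation of $t$, where $c=cs(\mathcal{R})$, $\bar c_j=m-c_j$, and $F_{\bar c}$ is the bottom-left flushed $m\times n$ matrix with column sums $\bar c$.
   Context: For $M\in\{0,1\}^{m\times n}$: $\bar M_{ij}=1-M_{ij}$; $rs(M)=(\sum_j M_{ij})_i$; $cs(M)=(\sum_i M_{ij})_j$; $ars(M)=(i+\sum_j M_{ij})_{i=1..m}$; $acs(M)=(j+\sum_i M_{ij})_{j=1..n}$. $M$ is bottom-left flushed if whenever $M_{ij}=1$, also $M_{i'j'}=1$ for all $i'\ge i$, $j'\le j$. A res-representation of $\alpha^\mu\beta^\nu$ is $\mathcal{R}\in\{0,1\}^{m\times n}$ with $rs(\mathcal{R})=\mu$ and $cs(\bar{\mathcal{R}})=\nu$. $PC(A,B)$ means $\{acs(A)_1,\dots,acs(A)_n,ars(B)_1,\dots,ars(B)_m\}=\{1,\dots,m+n\}$. A syl-representation of $\alpha^\mu\beta^\nu$ is a pair $(\mathcal{S}_1,\mathcal{S}_2)$ in $\{0,1\}^{m\times n}$ with $rs(\mathcal{S}_1)=\mu$, $cs(\mathcal{S}_2)=\nu$, $PC(\mathcal{S}_1,\mathcal{S}_2)$. *)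

(* Defs.v *)
(* 0/1 matrices are modelled as 'M[bool]_(m,n); entries
   are read as naturals via the bool >-> nat coercion (true = 1). *)
From mathcomp Require Import all_boot all_order all_algebra.
Set Implicit Arguments. Unset Strict Implicit. Unset Printing Implicit Defensive.

Section Defs.
Variables m n : nat.

Definition mxbar (M : 'M[bool]_(m, n)) : 'M[bool]_(m, n) :=
  \matrix_(i, j) ~~ M i j.

Definition rs (M : 'M[bool]_(m, n)) (i : 'I_m) : nat := \sum_(j < n) (M i j : nat).
Definition cs (M : 'M[bool]_(m, n)) (j : 'I_n) : nat := \sum_(i < m) (M i j : nat).

(* augmented row/column sums, with 1-based indices i+1, j+1 *)
Definition ars (M : 'M[bool]_(m, n)) (i : 'I_m) : nat := i.+1 + rs M i.
Definition acs (M : 'M[bool]_(m, n)) (j : 'I_n) : nat := j.+1 + cs M j.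

Definition bl_flushed (M : 'M[bool]_(m, n)) : Prop :=
  forall (i i' : 'I_m) (j j' : 'I_n),
    M i j -> i <= i' -> j' <= j -> M i' j'.

Definition res_rep (mu : 'I_m -> nat) (nu : 'I_n -> nat) (R : 'M[bool]_(m, n)) : Prop :=
  (forall i, rs R i = mu i) /\ (forall j, cs (mxbar R) j = nu j).

Definition PC (A B : 'M[bool]_(m, n)) : Prop :=
  [seq acs A j | j : 'I_n] ++ [seq ars B i | i : 'I_m] =i iota 1 (m + n).

Definition syl_rep (mu : 'I_m -> nat) (nu : 'I_n -> nat)
    (S1 S2 : 'M[bool]_(m, n)) : Prop :=
  [/\ forall i, rs S1 i = mu i, forall j, cs S2 j = nu j & PC S1 S2].

End Defs.

(* Main.v *)
Require Import Defs.
From mathcomp Require Import fingroup perm.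
From mathcomp Require Import all_boot all_order all_algebra zify.

Lemma sum_ge (k n : nat) : \sum_(i < n) nat_of_bool (k <= i) = n - k.
Proof.
elim: n => [|n IH]; first by rewrite big_ord0.
rewrite big_ord_recr /= IH; case: leqP => h /=; lia.
Qed.

Lemma sum_lt (k n : nat) : \sum_(i < n) nat_of_bool (i < k) = minn n k.
Proof.
elim: n => [|n IH]; first by rewrite big_ord0 min0n.
rewrite big_ord_recr /= IH; case: ltnP => h /=; lia.
Qed.

Lemma sum_bool_le n (P : 'I_n -> bool) : \sum_(j < n) nat_of_bool (P j) <= n.
Proof.
apply: leq_trans (_ : \sum_(j < n) 1 <= n).
  by apply: leq_sum => j _; case: (P j).
by rewrite sum_nat_const card_ord muln1.
Qed.

Lemma downclosed n (P : 'I_n -> bool) :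
  (forall j j' : 'I_n, j' <= j -> P j -> P j') ->
  forall j, P j = (j < \sum_(i < n) nat_of_bool (P i)).
Proof.
move=> Hc j; case Pj: (P j).
  apply/esym; apply: leq_trans (_ : \sum_(i < n) nat_of_bool (i < j.+1) <= _).
    by rewrite sum_lt; have := ltn_ord j; lia.
  apply: leq_sum => i _; case: (ltnP i j.+1) => //= h; by rewrite (Hc j i).
apply/esym/negbTE; rewrite -leqNgt.
apply: (@leq_trans (\sum_(i < n) nat_of_bool (i < j))).
  apply: leq_sum => i _; case Pi: (P i) => //=; case: (ltnP i j) => //= h.
  by rewrite (Hc i j h Pi) in Pj.
by rewrite sum_lt geq_minr.
Qed.

Lemma upclosed m (P : 'I_m -> bool) :
  (forall i i' : 'I_m, P i -> i <= i' -> P i') ->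
  forall i, P i = (m - \sum_(k < m) nat_of_bool (P k) <= i).
Proof.
move=> Hc i; case Pi: (P i).
  apply/esym; have : \sum_(k < m) nat_of_bool (i <= k) <= \sum_(k < m) nat_of_bool (P k).
    apply: leq_sum => k _; case: (leqP i k) => //= h; by rewrite (Hc i k).
  rewrite sum_ge; lia.
apply/esym/negbTE; rewrite -ltnNge.
have : \sum_(k < m) nat_of_bool (P k) <= \sum_(k < m) nat_of_bool (i.+1 <= k).
  apply: leq_sum => k _; case Pk: (P k) => //=; case: (leqP i.+1 k) => //= h.
  by rewrite (Hc k i Pk) in Pi.
rewrite sum_ge; have := ltn_ord i; lia.
Qed.

Lemma cs_bar m n (R : 'M[bool]_(m, n)) j : cs (mxbar R) j + cs R j = m.
Proof.
rewrite /cs -big_split /=.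
transitivity (\sum_(i < m) 1); last by rewrite sum_nat_const card_ord muln1.
by apply: eq_bigr => i _; rewrite mxE; case: (R i j).
Qed.

Lemma cover m n (d : 'I_n -> nat) :
  (forall j1 j2 : 'I_n, j1 <= j2 -> d j1 <= d j2) -> (forall j, d j <= m) ->
  forall x, 1 <= x <= m + n ->
  (exists j : 'I_n, x = j.+1 + d j) \/
  (exists i : 'I_m, x = i.+1 + \sum_(j < n) nat_of_bool (d j <= i)).
Proof.
move=> mono bnd x /andP[x1 xmn].
case: (boolP [exists j : 'I_n, x == j.+1 + d j]) => [/existsP[j /eqP ->]|hx].
  by left; exists j.
right; have hxj : forall j : 'I_n, x != j.+1 + d j.
  by move=> j; apply: contraNN hx => h; apply/existsP; exists j.
pose P := fun j : 'I_n => j.+1 + d j < x.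
have Pc : forall j j' : 'I_n, j' <= j -> P j -> P j'.
  move=> j j' le; rewrite /P => h; have := mono _ _ le; lia.
set k := \sum_(i < n) nat_of_bool (P i).
have Pk : forall j, P j = (j < k) := @downclosed _ _ Pc.
have kn : k <= n by apply: sum_bool_le.
have K1 : 0 < k -> exists K : 'I_n, (K : nat) = k.-1 /\ P K.
  move=> k0; have h : k.-1 < n by lia.
  exists (Ordinal h); split => //; rewrite Pk /=; lia.
have K2 : k < n -> exists K : 'I_n, (K : nat) = k /\ x < K.+1 + d K.
  move=> h; exists (Ordinal h); split => //.
  have : ~~ P (Ordinal h) by rewrite Pk /=; lia.
  rewrite /P -leqNgt leq_eqVlt => /orP[/eqP e|//].
  by have := hxj (Ordinal h); rewrite -e eqxx.
have kx : k <= x.-1.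
  case: (posnP k) => [->//|k0]; have [K [e PK]] := K1 k0.
  move: PK; rewrite /P; lia.
have im : x.-1 - k < m.
  case: (ltnP k n) => h; last by lia.
  have [K [e lt]] := K2 h; have := bnd K; lia.
exists (Ordinal im) => /=.
have -> : \sum_(j < n) nat_of_bool (d j <= x.-1 - k) = k.
  apply: eq_bigr => j _; congr nat_of_bool; rewrite Pk.
  case: (ltnP j k) => h.
    have [K [e PK]] := K1 (leq_ltn_trans (leq0n _) h).
    have := mono j K; rewrite e; move: PK; rewrite /P; lia.
  have [K [e lt]] := K2 (leq_ltn_trans h (ltn_ord j)).
  have := mono K j; rewrite e; lia.
lia.
Qed.

Lemma PC_core m n (d : 'I_n -> nat) (a : 'I_n -> nat) (b : 'I_m -> nat) :
  (forall j1 j2 : 'I_n, j1 <= j2 -> d j1 <= d j2) -> (forall j, d j <= m) ->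
  (forall j, a j = j.+1 + d j) ->
  (forall i, b i = i.+1 + \sum_(j < n) nat_of_bool (d j <= i)) ->
  [seq a j | j : 'I_n] ++ [seq b i | i : 'I_m] =i iota 1 (m + n).
Proof.
move=> mono bnd Ha Hb x; rewrite mem_cat mem_iota; apply/idP/idP.
  case/orP => /mapP[j _ ->].
    rewrite Ha; have := bnd j; have := ltn_ord j; lia.
  rewrite Hb; have := @sum_bool_le _ (fun k => d k <= j); have := ltn_ord j; lia.
move=> hx; have hx' : 1 <= x <= m + n by lia.
case: (@cover _ _ _ mono bnd _ hx') => [[j ->]|[i ->]]; apply/orP; [left|right];
  apply/mapP; [exists j|exists i]; rewrite ?mem_enum //.
Qed.

Lemma sortperm n (f : 'I_n -> nat) :
  exists s : {perm 'I_n}, forall j1 j2 : 'I_n, j1 <= j2 -> f (s j1) <= f (s j2).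
Proof.
pose r := fun a b : 'I_n => f a <= f b.
have tr : transitive r by move=> y x z; rewrite /r => h1 h2; apply: leq_trans h1 h2.
have tot : total r by move=> a b; rewrite /r leq_total.
have rf : reflexive r by move=> a; rewrite /r.
set s := sort r (enum 'I_n).
have ss : size s = n by rewrite size_sort size_enum_ord.
have us : uniq s by rewrite sort_uniq enum_uniq.
have sor : sorted r s := sort_sorted tot _.
pose g := fun j : 'I_n => nth j s j.
have ginj : injective g.
  move=> a b; rewrite /g (set_nth_default a b) ?ss // => E.
  apply/val_inj/eqP; rewrite -(nth_uniq a _ _ us) ?ss ?ltn_ord //.
  by apply/eqP; exact: E.
exists (perm ginj) => j1 j2 le; rewrite !permE /g.
rewrite (set_nth_default j1 j2) ?ss //.
by apply: (sorted_leq_nth tr rf j1 sor); rewrite ?inE ?ss.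
Qed.

Theorem mainTheorem9 (m n : nat) (mu : 'I_m -> nat) (nu : 'I_n -> nat) :
  ((exists R : 'M[bool]_(m, n), res_rep mu nu R) ->
     exists S1 S2 : 'M[bool]_(m, n), syl_rep mu nu S1 S2)
  /\
  ((forall j1 j2 : 'I_n, j1 <= j2 -> nu j2 <= nu j1) ->
   forall R : 'M[bool]_(m, n), res_rep mu nu R ->
     (exists F : 'M[bool]_(m, n),
        bl_flushed F /\ forall j, cs F j = m - cs R j) /\
     (forall F : 'M[bool]_(m, n),
        bl_flushed F -> (forall j, cs F j = m - cs R j) ->
        syl_rep mu nu R F)).
Proof.
split.
  case=> R [Hmu Hnu].
  have Hc j : cs R j + nu j = m by rewrite -Hnu addnC cs_bar.
  have [s Hs] := @sortperm _ (fun j => cs R j).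
  exists (\matrix_(i, j) R i (s j))%R, (\matrix_(i, j) (cs R j <= i)%N)%R.
  have csS1 j : cs (\matrix_(i, j) R i (s j))%R j = cs R (s j).
    by rewrite /cs; apply: eq_bigr => i _; rewrite mxE.
  split.
  - move=> i; rewrite -Hmu /rs [RHS](reindex_inj (@perm_inj _ s)) /=.
    by apply: eq_bigr => j _; rewrite mxE.
  - move=> j; rewrite /cs.
    under eq_bigr do rewrite mxE.
    by rewrite sum_ge -/(cs R j); have := Hc j; lia.
  - apply: (@PC_core _ _ (fun j => cs R (s j))).
    + by move=> j1 j2 /Hs.
    + by move=> j; have := Hc (s j); lia.
    + by move=> j; rewrite /acs csS1.
    + move=> i; rewrite /ars /rs; congr (_ + _).
      rewrite (reindex_inj (@perm_inj _ s)) /=.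
      by apply: eq_bigr => j _; rewrite mxE.
move=> Hmono R [Hmu Hnu].
have Hc j : cs R j + nu j = m by rewrite -Hnu addnC cs_bar.
have mono : forall j1 j2 : 'I_n, j1 <= j2 -> cs R j1 <= cs R j2.
  move=> j1 j2 /Hmono; have := Hc j1; have := Hc j2; lia.
split.
  exists (\matrix_(i, j) (cs R j <= i)%N)%R; split.
    move=> i i' j j'; rewrite !mxE => h hi hj.
    by apply: leq_trans (mono _ _ hj) (leq_trans h hi).
  move=> j; rewrite /cs; under eq_bigr do rewrite mxE.
  by rewrite sum_ge.
move=> F Hfl HcF.
have HF i j : F i j = (cs R j <= i).
  have Pc : forall i i' : 'I_m, F i j -> i <= i' -> F i' j.
    by move=> i1 i2 h le; apply: (Hfl i1 i2 j j).
  rewrite (@upclosed _ (fun i => F i j) Pc i) /=.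
  have := HcF j; rewrite /cs => ->; have := Hc j.
  by rewrite -/(cs R j) => e; congr (_ <= _); lia.
split => //.
- by move=> j; rewrite HcF; have := Hc j; lia.
- apply: (@PC_core _ _ (fun j => cs R j)) => //.
  + by move=> j; have := Hc j; lia.
  + move=> i; rewrite /ars /rs; congr (_ + _).
    by apply: eq_bigr => j _; rewrite HF.
Qed.
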